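(* Let $N$ and $\tilde{N}$ be real symmetric $n\times n$ matrices such that $N$ is positive semidefinite, $I-N$ and $I-\tilde N$ are positive semidefinite, and $I-\tilde{N}\approx_{\epsilon}I-N$ for some $\epsilon\in[0,1]$. Then $I-\tilde{N}^2\approx_{\epsilon}I-N^2$.
   Context: For real symmetric $X,Y$ and $\epsilon\ge0$, $X\approx_\epsilon Y$ means $(1-\epsilon)v^TYv\le v^TXv\le(1+\epsilon)v^TYv$ for all $v\in\mathbb{R}^n$. *)

(* Defs.v *)
From HB Require Import structures.
From mathcomp Require Import all_boot all_order all_algebra.
Set Implicit Arguments. Unset Strict Implicit. Unset Printing Implicit Defensive.
Import Order.TTheory GRing.Theory Num.Theory.
Local Open Scope ring_scope.

Definition qform (R : rcfType) (n : nat) (X : 'M[R]_n) (v : 'cV[R]_n) : R :=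
  (v^T *m X *m v) 0 0.

Definition symmx (R : rcfType) (n : nat) (X : 'M[R]_n) : Prop := X^T = X.

Definition psd (R : rcfType) (n : nat) (X : 'M[R]_n) : Prop :=
  forall v : 'cV[R]_n, 0 <= qform X v.

Definition approx (R : rcfType) (n : nat) (eps : R) (X Y : 'M[R]_n) : Prop :=
  forall v : 'cV[R]_n,
    (1 - eps) * qform Y v <= qform X v /\ qform X v <= (1 + eps) * qform Y v.

(* Main.v *)
Require Import Defs.
From HB Require Import structures.
From mathcomp Require Import all_boot all_order all_algebra.
From mathcomp Require Import ring lra.
Import Order.TTheory GRing.Theory Num.Theory.
Local Open Scope ring_scope.

Section Aux.
Variables (R : rcfType) (n : nat).
Implicit Types (M : 'M[R]_n) (x y z : 'cV[R]_n).

Definition bf M x y : R := (x^T *m M *m y) 0 0.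

Lemma bfD1 M x y z : bf M (x + y) z = bf M x z + bf M y z.
Proof. by rewrite /bf linearD /= !mulmxDl mxE. Qed.
Lemma bfB1 M x y z : bf M (x - y) z = bf M x z - bf M y z.
Proof. by rewrite /bf linearB /= !mulmxBl !mxE. Qed.
Lemma bfD2 M x y z : bf M z (x + y) = bf M z x + bf M z y.
Proof. by rewrite /bf mulmxDr mxE. Qed.
Lemma bfB2 M x y z : bf M z (x - y) = bf M z x - bf M z y.
Proof. by rewrite /bf mulmxBr !mxE. Qed.
Lemma bfMB M1 M2 x y : bf (M1 - M2) x y = bf M1 x y - bf M2 x y.
Proof. by rewrite /bf mulmxBr mulmxBl !mxE. Qed.
Lemma bf1r M x y : bf 1%:M x (M *m y) = bf M x y.
Proof. by rewrite /bf mulmx1 mulmxA. Qed.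
Lemma bfsym M x y : M^T = M -> bf M x y = bf M y x.
Proof.
move=> sM; rewrite /bf -[in LHS](trmxK (x^T *m M *m y)) mxE.
by rewrite !trmx_mul trmxK sM mulmxA.
Qed.
Lemma bfsq M x : M^T = M -> bf (M *m M) x x = bf 1%:M (M *m x) (M *m x).
Proof.
move=> sM; rewrite /bf mulmx1 trmx_mul sM !mulmxA.
by [].
Qed.

Definition G M x y : R :=
  2 * bf 1%:M (x - y) (x - y) - bf (1%:M - M) (x - y) (x - y)
  + bf (1%:M - M) (x + y) (x + y).

Lemma Gid M x y : M^T = M ->
  G M x y = 2 * bf (1%:M - M *m M) x x + 2 * bf 1%:M (y - M *m x) (y - M *m x).
Proof.
move=> sM; rewrite /G !bfMB !bfB1 !bfD1 !bfB2 !bfD2 bfsq //.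
rewrite !bf1r.
have h1 : bf 1%:M y x = bf 1%:M x y by apply: bfsym; rewrite trmx1.
have h2 : bf M y x = bf M x y by apply: bfsym.
have h3 : bf 1%:M (M *m x) y = bf M x y.
  by rewrite bfsym ?trmx1 // bf1r h2.
rewrite h1 h2 h3; ring.
Qed.

End Aux.
Arguments bf {R n}.
Arguments G {R n}.
Arguments bfMB {R n}.
Arguments bfsq {R n}.

Theorem mainTheorem7 (R : rcfType) (n : nat) (N Nt : 'M[R]_n) (eps : R) :
  symmx N -> symmx Nt ->
  psd N -> psd (1%:M - N) -> psd (1%:M - Nt) ->
  0 <= eps -> eps <= 1 ->
  approx eps (1%:M - Nt) (1%:M - N) ->
  approx eps (1%:M - Nt *m Nt) (1%:M - N *m N).
Proof.
move=> sN sNt pN pIN pINt e0 e1 ap.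
have sq (x : 'cV[R]_n) : 0 <= bf 1%:M x x.
  have := pN x; have := pIN x; rewrite /qform -/(bf _ _ _) -/(bf _ _ _) bfMB.
  lra.
have key (x y : 'cV[R]_n) : (1 - eps) * G N x y <= G Nt x y /\ G Nt x y <= (1 + eps) * G N x y.
  have [a1 a2] := ap (x - y); have [b1 b2] := ap (x + y).
  have := pN (x - y); have := pIN (x - y).
  move: a1 a2 b1 b2; rewrite /qform /G -!/(bf _ _ _) !bfMB.
  move=> a1 a2 b1 b2 c1 c2; nra.
move=> v; rewrite /qform -!/(bf _ _ _).
have [k1 _] := key v (Nt *m v); have [_ k2] := key v (N *m v).
rewrite !Gid // in k1 k2.
have z : bf 1%:M (0 : 'cV[R]_n) 0 = 0 by rewrite /bf mulmx0 mxE.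
rewrite !subrr z in k1 k2.
have s1 := sq (Nt *m v - N *m v); have s2 := sq (N *m v - Nt *m v).
split; nra.
Qed.
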